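(* Consider the algorithm described in the context. Suppose $f$ is bounded below by $f_{\mathrm{low}}$, twice continuously differentiable with $L_H$-Lipschitz continuous Hessian, and $\|\nabla^2 f(\mathbf{x}_k)\|\leq M$ for all $k$, for some $M>0$. Fix $\epsilon>0$ and an iteration $k$ such that $$\theta := (1-\alpha)^2 - \frac{4M(r-1)\alpha^2}{\epsilon(1-\alpha)^2} > 0,$$ $P_k$ is well-aligned and $\sigma_k\geq\epsilon$. If iteration $k$ is successful, then $$\hat\sigma^m_k\geq c_1\epsilon,\qquad c_1:=\frac{\min(1-\alpha,(1-\alpha)^2,\theta)}{1+\kappa_\sigma\mu^{-1}},\qquad \kappa_\sigma:=\max(\kappa_{\mathrm{eg}}\Delta_{\max},\kappa_{\mathrm{eh}}).$$
   Context: Algorithm: Let $f:\mathbb{R}^n\to\mathbb{R}$. Fix $\mathbf{x}_0$, $p\in\{1,\ldots,n\}$, $0<\Delta_0\leq\Delta_{\max}$, $0<\gamma_{\mathrm{dec}}<1<\gamma_{\mathrm{inc}}$, $\eta\in(0,1)$, $\mu>0$. For $k=0,1,\ldots$: select a random $P_k\in\mathbb{R}^{n\times p}$; build $\hat m_k(\hat{\mathbf{s}})=f(\mathbf{x}_k)+\hat{\mathbf{g}}_k^T\hat{\mathbf{s}}+\frac12\hat{\mathbf{s}}^T\hat H_k\hat{\mathbf{s}}$ ($\hat H_k$ symmetric) which is $P_k$-fully quadratic: constants $\kappa_{\mathrm{ef}},\kappa_{\mathrm{eg}},\kappa_{\mathrm{eh}}>0$ independent of $k$ with $|f(\mathbf{x}_k+P_k\hat{\mathbf{s}})-\hat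 m_k(\hat{\mathbf{s}})|\leq\kappa_{\mathrm{ef}}\Delta_k^3$, $\|P_k^T\nabla f(\mathbf{x}_k+P_k\hat{\mathbf{s}})-\nabla\hat m_k(\hat{\mathbf{s}})\|\leq\kappa_{\mathrm{eg}}\Delta_k^2$, $\|P_k^T\nabla^2 f(\mathbf{x}_k+P_k\hat{\mathbf{s}})P_k-\hat H_k\|\leq\kappa_{\mathrm{eh}}\Delta_k$ for all $\|\hat{\mathbf{s}}\|\leq\Delta_k$; compute a step $\hat{\mathbf{s}}_k$ with $\|\hat{\mathbf{s}}_k\|\leq\Delta_k$; let $R_k:=\frac{f(\mathbf{x}_k)-f(\mathbf{x}_k+P_k\hat{\mathbf{s}}_k)}{\hat m_k(\mathbf{0})-\hat m_k(\hat{\mathbf{s}}_k)}$, $\hat\tau^m_k:=\max(-\lambda_{\min}(\hat H_k),0)$, $\hat\sigma^m_k:=\max(\|\hat{\mathbf{g}}_k\|,\hat\tau^m_k)$; if $R_k\geq\eta$ and $\hat\sigma^m_k\geq\mu\Delta_k$ the iteration is successful: $\mathbf{x}_{k+1}=\mathbf{x}_k+P_k\hat{\mathbf{s}}_k$, $\Delta_{k+1}=\min(\gamma_{\mathrm{inc}}\Delta_k,\Delta_{\max})$; otherwise unsuccessful: $\mathbf{x}_{k+1}=\mathbf{x}_k$, $\Delta_{k+1}=\gamma_{\mathrm{dec}}\Delta_k$. Criticality: $\tau_k:=\max(-\lambda_{\min}(\nabla^2 f(\mathbf{x}_k)),0)$, $\sigma_k:=\max(\|\nabla f(\mathbf{x}_k)\|,\tau_k)$.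 Well-alignment: write $\nabla^2 f(\mathbf{x}_k)=\sum_{i=1}^r\lambda_i\mathbf{v}_i\mathbf{v}_i^T$, $\lambda_1\geq\cdots\geq\lambda_r$, $r=\operatorname{rank}(\nabla^2 f(\mathbf{x}_k))$, $\mathbf{v}_i$ orthonormal, $\hat{\mathbf{v}}_i:=P_k^T\mathbf{v}_i$; $P_k$ is well-aligned if $\|P_k\|\leq P_{\max}$, $\|P_k^T\nabla f(\mathbf{x}_k)\|\geq(1-\alpha)\|\nabla f(\mathbf{x}_k)\|$, $\|\hat{\mathbf{v}}_r\|\geq1-\alpha$, and $(\hat{\mathbf{v}}_i^T\hat{\mathbf{v}}_r)^2\leq4\alpha^2$ for $i=1,\ldots,r-1$, for fixed $\alpha\in(0,1)$, $P_{\max}>0$ independent of $k$. *)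

(* Defs.v *)
From mathcomp Require Import all_boot all_order all_algebra.
From mathcomp Require Import all_classical all_reals all_analysis.
Import GRing.Theory Num.Theory.
Import numFieldTopology.Exports numFieldNormedType.Exports.

Set Implicit Arguments.
Unset Strict Implicit.
Unset Printing Implicit Defensive.

Local Open Scope ring_scope.
Local Open Scope classical_set_scope.

Section Defs.
Variable R : realType.

Definition dot {m : nat} (u v : 'cV[R]_m) : R := (u^T *m v) 0 0.
Definition vnorm {m : nat} (u : 'cV[R]_m) : R := Num.sqrt (\sum_i u i 0 ^+ 2).

Definition opnorm {m k : nat} (A : 'M[R]_(m, k)) : R :=
  sup [set y | exists u : 'cV[R]_k, vnorm u <= 1 /\ y = vnorm (A *m u)].

Definition partial {n : nat} (i : 'I_n) (f : 'cV[R]_n -> R) (x : 'cV[R]_n) : R :=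
  'D_(delta_mx i 0) f x.
Definition grad {n : nat} (f : 'cV[R]_n -> R) (x : 'cV[R]_n) : 'cV[R]_n :=
  \col_i partial i f x.
Definition hess {n : nat} (f : 'cV[R]_n -> R) (x : 'cV[R]_n) : 'M[R]_n :=
  \matrix_(i, j) partial j (partial i f) x.

Definition C2 {n : nat} (f : 'cV[R]_n -> R) : Prop :=
  [/\ continuous f,
      (forall (i : 'I_n) x, derivable f x (delta_mx i 0 : 'cV[R]_n)),
      (forall i : 'I_n, continuous (partial i f)),
      (forall (i j : 'I_n) x, derivable (partial i f) x (delta_mx j 0 : 'cV[R]_n)) &
      (forall i j : 'I_n, continuous (partial j (partial i f)))].

Definition lambda_min {m : nat} (A : 'M[R]_m) : R := inf [set a | eigenvalue A a].

Definition tau_of {m : nat} (A : 'M[R]_m) : R := Num.max (- lambda_min A) 0.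
Definition sigma_of {m : nat} (g : 'cV[R]_m) (A : 'M[R]_m) : R :=
  Num.max (vnorm g) (tau_of A).

Definition model_val {p : nat} (f0 : R) (g : 'cV[R]_p) (H : 'M[R]_p) (s : 'cV[R]_p) : R :=
  f0 + dot g s + 2^-1 * dot s (H *m s).
Definition model_grad {p : nat} (g : 'cV[R]_p) (H : 'M[R]_p) (s : 'cV[R]_p) : 'cV[R]_p :=
  g + H *m s.

Definition fully_quadratic {n p : nat} (f : 'cV[R]_n -> R) (x : 'cV[R]_n)
    (P : 'M[R]_(n, p)) (D : R) (g : 'cV[R]_p) (H : 'M[R]_p) (kef keg keh : R) : Prop :=
  forall s : 'cV[R]_p, vnorm s <= D ->
    [/\ `|f (x + P *m s) - model_val (f x) g H s| <= kef * D ^+ 3,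
        vnorm (P^T *m grad f (x + P *m s) - model_grad g H s) <= keg * D ^+ 2 &
        opnorm (P^T *m hess f (x + P *m s) *m P - H) <= keh * D].

Definition ratio {n p : nat} (f : 'cV[R]_n -> R) (x : 'cV[R]_n) (P : 'M[R]_(n, p))
    (g : 'cV[R]_p) (H : 'M[R]_p) (s : 'cV[R]_p) : R :=
  (f x - f (x + P *m s)) / (model_val (f x) g H 0 - model_val (f x) g H s).

Definition successful {n p : nat} (eta mu : R) (f : 'cV[R]_n -> R) (x : 'cV[R]_n)
    (P : 'M[R]_(n, p)) (D : R) (g : 'cV[R]_p) (H : 'M[R]_p) (s : 'cV[R]_p) : Prop :=
  eta <= ratio f x P g H s /\ mu * D <= sigma_of g H.

(* H = sum_{i<r} lam_i v_i v_i^T with r = rank H, lam nonincreasing, v orthonormal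
   (indices shifted: paper's i = 1..r is 0..r-1 here) *)
Definition eig_decomp {n : nat} (H : 'M[R]_n) (r : nat) (lam : nat -> R)
    (v : nat -> 'cV[R]_n) : Prop :=
  [/\ r = \rank H,
      (forall i j : nat, (i <= j)%N -> (j < r)%N -> lam j <= lam i),
      (forall i j : nat, (i < r)%N -> (j < r)%N -> dot (v i) (v j) = (i == j)%:R) &
      H = \sum_(i < r) lam i *: (v i *m (v i)^T)].

Definition well_aligned {n p : nat} (alpha Pmax : R) (P : 'M[R]_(n, p))
    (gx : 'cV[R]_n) (r : nat) (v : nat -> 'cV[R]_n) : Prop :=
  [/\ opnorm P <= Pmax,
      (1 - alpha) * vnorm gx <= vnorm (P^T *m gx),
      ((0 < r)%N -> 1 - alpha <= vnorm (P^T *m v r.-1)) &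
      (forall i : nat, (i < r.-1)%N ->
         dot (P^T *m v i) (P^T *m v r.-1) ^+ 2 <= 4 * alpha ^+ 2)].

End Defs.

(* Main.v *)
Require Import Defs.
From mathcomp Require Import all_boot all_order all_algebra.
From mathcomp Require Import all_classical all_reals all_analysis.
Import GRing.Theory Num.Theory.
Import numFieldTopology.Exports numFieldNormedType.Exports.
From mathcomp Require Import ring lra.
Import Order.TTheory.
Local Open Scope ring_scope.
Local Open Scope classical_set_scope.

Set Implicit Arguments.
Unset Strict Implicit.
Unset Printing Implicit Defensive.
Section Aux.
Variable R : realType.

Lemma dotE m (u v : 'cV[R]_m) : dot u v = \sum_i u i 0 * v i 0.
Proof. by rewrite /dot mxE; apply: eq_bigr => i _; rewrite mxE. Qed.

Lemma dotC m (u v : 'cV[R]_m) : dot u v = dot v u.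
Proof. by rewrite !dotE; apply: eq_bigr => i _; rewrite mulrC. Qed.

Lemma dotDr m (u v w : 'cV[R]_m) : dot u (v + w) = dot u v + dot u w.
Proof. by rewrite !dotE -big_split; apply: eq_bigr => i _; rewrite mxE mulrDr. Qed.

Lemma dotBr m (u v w : 'cV[R]_m) : dot u (v - w) = dot u v - dot u w.
Proof. by rewrite !dotE -sumrB; apply: eq_bigr => i _; rewrite !mxE mulrBr. Qed.

Lemma dotZr m (u v : 'cV[R]_m) a : dot u (a *: v) = a * dot u v.
Proof. by rewrite !dotE mulr_sumr; apply: eq_bigr => i _; rewrite mxE mulrCA. Qed.

Lemma dotDl m (u v w : 'cV[R]_m) : dot (v + w) u = dot v u + dot w u.
Proof. by rewrite dotC dotDr !(dotC u). Qed.
Lemma dotBl m (u v w : 'cV[R]_m) : dot (v - w) u = dot v u - dot w u.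
Proof. by rewrite dotC dotBr !(dotC u). Qed.
Lemma dotZl m (u v : 'cV[R]_m) a : dot (a *: v) u = a * dot v u.
Proof. by rewrite dotC dotZr dotC. Qed.

Lemma dot0r m (u : 'cV[R]_m) : dot u 0 = 0.
Proof. by rewrite dotE big1 // => i _; rewrite mxE mulr0. Qed.

Lemma dot_mulmx m k (u : 'cV[R]_m) (A : 'M[R]_(m, k)) (v : 'cV[R]_k) :
  dot u (A *m v) = dot (A^T *m u) v.
Proof. by rewrite /dot trmx_mul trmxK mulmxA. Qed.

Lemma dot_sumr m I (s : seq I) (Pr : pred I) (u : 'cV[R]_m) (F : I -> 'cV[R]_m) :
  dot u (\sum_(i <- s | Pr i) F i) = \sum_(i <- s | Pr i) dot u (F i).
Proof. by rewrite /dot mulmx_sumr summxE. Qed.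

Lemma dot_sumrM m I (s : seq I) (Pr : pred I) (u v : 'cV[R]_m) (F : I -> 'M[R]_m) :
  dot u ((\sum_(i <- s | Pr i) F i) *m v) = \sum_(i <- s | Pr i) dot u (F i *m v).
Proof. by rewrite mulmx_suml dot_sumr. Qed.

Lemma dot_outer m (y z v : 'cV[R]_m) :
  dot y ((v *m v^T) *m z) = dot y v * dot v z.
Proof.
rewrite -mulmxA [v^T *m z]mx11_scalar mul_mx_scalar dotZr mulrC.
by rewrite /dot.
Qed.

Definition nsq m (u : 'cV[R]_m) := dot u u.

Lemma nsq_ge0 m (u : 'cV[R]_m) : 0 <= nsq u.
Proof. by rewrite /nsq dotE sumr_ge0 // => i _; rewrite -expr2 sqr_ge0. Qed.

Lemma vnormE m (u : 'cV[R]_m) : vnorm u = Num.sqrt (nsq u).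
Proof. by rewrite /vnorm /nsq dotE; congr Num.sqrt; apply: eq_bigr => i _; rewrite expr2. Qed.

Lemma vnorm_sq m (u : 'cV[R]_m) : vnorm u ^+ 2 = nsq u.
Proof. by rewrite vnormE sqr_sqrtr // nsq_ge0. Qed.

Lemma vnorm_ge0 m (u : 'cV[R]_m) : 0 <= vnorm u.
Proof. by rewrite vnormE sqrtr_ge0. Qed.

Lemma nsq_eq0 m (u : 'cV[R]_m) : nsq u = 0 -> u = 0.
Proof.
rewrite /nsq dotE => /eqP; rewrite psumr_eq0; last by move=> i _; rewrite -expr2 sqr_ge0.
move=> /allP H; apply/matrixP => i j; rewrite (ord1 j) mxE.
have := H i (mem_index_enum _); rewrite -expr2 sqrf_eq0 => /eqP //.
Qed.

Lemma nsqZ m (u : 'cV[R]_m) a : nsq (a *: u) = a ^+ 2 * nsq u.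
Proof. by rewrite /nsq dotZl dotZr mulrA expr2. Qed.

Lemma vnormZ m (u : 'cV[R]_m) a : vnorm (a *: u) = `|a| * vnorm u.
Proof. by rewrite !vnormE nsqZ sqrtrM ?sqr_ge0 // sqrtr_sqr. Qed.

Lemma coord_le m (u : 'cV[R]_m) i : u i 0 ^+ 2 <= nsq u.
Proof.
rewrite /nsq dotE (bigD1 i) //= -expr2 lerDl sumr_ge0 // => j _.
by rewrite -expr2 sqr_ge0.
Qed.

Definition Kq m k (C : 'M[R]_(m, k)) := \sum_i \sum_j `|C i j|.

Lemma Kq_ge0 m k (C : 'M[R]_(m, k)) : 0 <= Kq C.
Proof. by rewrite /Kq sumr_ge0 // => i _; rewrite sumr_ge0. Qed.

Lemma quad_bound m (C : 'M[R]_m) (u : 'cV[R]_m) :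
  `|dot u (C *m u)| <= Kq C * nsq u.
Proof.
have -> : dot u (C *m u) = \sum_i \sum_j C i j * (u i 0 * u j 0).
  rewrite dotE; apply: eq_bigr => i _; rewrite mxE mulr_sumr.
  by apply: eq_bigr => j _; ring.
rewrite /Kq mulr_suml; apply: (le_trans (ler_norm_sum _ _ _)).
apply: ler_sum => i _; rewrite mulr_suml; apply: (le_trans (ler_norm_sum _ _ _)).
apply: ler_sum => j _; rewrite normrM ler_wpM2l //.
have hi := coord_le u i; have hj := coord_le u j.
rewrite normrM.
have : `|u i 0| * `|u j 0| <= (u i 0 ^+ 2 + u j 0 ^+ 2) / 2.
  rewrite -[u i 0 ^+ 2]real_normK ?num_real // -[u j 0 ^+ 2]real_normK ?num_real //.
  set a := `|u i 0|; set b := `|u j 0|.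
  have : 0 <= (a - b) ^+ 2 by apply: sqr_ge0.
  lra.
have := nsq_ge0 u; lra.
Qed.


Lemma disc_le (a b c : R) : 0 <= c -> (forall t, 0 <= a + 2 * t * b + t ^+ 2 * c) ->
  b ^+ 2 <= a * c.
Proof.
move=> c0 H; have [c00|cpos] := eqVneq c 0.
  rewrite c00 mulr0; have [b0|bn0] := eqVneq b 0; first by rewrite b0 expr0n.
  have := H (- (a + 1) / (2 * b)); rewrite c00 mulr0 addr0.
  have -> : 2 * (- (a + 1) / (2 * b)) * b = - (a + 1).
    by field.
  lra.
have cp : 0 < c by rewrite lt_neqAle eq_sym cpos c0.
have := H (- b / c).
have -> : a + 2 * (- b / c) * b + (- b / c) ^+ 2 * c = a - b ^+ 2 / c.
  by field; rewrite gt_eqF.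
rewrite subr_ge0 ler_pdivrMr //.
Qed.

Lemma psd_cs m (B : 'M[R]_m) (z y : 'cV[R]_m) : B^T = B ->
  (forall w, 0 <= dot w (B *m w)) ->
  dot z (B *m y) ^+ 2 <= dot z (B *m z) * dot y (B *m y).
Proof.
move=> BT psd; apply: disc_le => // t.
have := psd (z + t *: y).
rewrite mulmxDr !dotDl !dotDr -!scalemxAr !dotZl !dotZr.
have -> : dot y (B *m z) = dot z (B *m y) by rewrite dot_mulmx BT dotC.
move=> h; apply: (le_trans h); rewrite le_eqVlt; apply/orP; left; apply/eqP; ring.
Qed.

Lemma cs m (z y : 'cV[R]_m) : dot z y ^+ 2 <= nsq z * nsq y.
Proof.
have := @psd_cs m 1%:M z y (trmx1 _ _).
rewrite !mul1mx; apply => w; rewrite mul1mx; exact: nsq_ge0.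
Qed.

Lemma sq_le (x y : R) : 0 <= y -> x ^+ 2 <= y ^+ 2 -> x <= y.
Proof. move=> y0 h; nra. Qed.

Lemma cs_abs m (z y : 'cV[R]_m) : `|dot z y| <= vnorm z * vnorm y.
Proof.
apply: sq_le; first by rewrite mulr_ge0 // vnorm_ge0.
by rewrite real_normK ?num_real // exprMn !vnorm_sq cs.
Qed.

Lemma vnorm_triangle m (a b : 'cV[R]_m) : vnorm (a + b) <= vnorm a + vnorm b.
Proof.
apply: sq_le; first by rewrite addr_ge0 // vnorm_ge0.
rewrite vnorm_sq /nsq !dotDl !dotDr (dotC b a).
have := cs_abs a b; have := vnorm_sq a; have := vnorm_sq b.
rewrite /nsq => hb ha; have := ler_norm (dot a b). nra.
Qed.

Lemma opnorm_ub m k (A : 'M[R]_(m, k)) :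
  has_ubound [set y | exists u : 'cV[R]_k, vnorm u <= 1 /\ y = vnorm (A *m u)].
Proof.
exists (1 + Kq (A^T *m A)) => _ [u [hu ->]].
have h1 : nsq u <= 1.
  rewrite -vnorm_sq; have := vnorm_ge0 u; nra.
have h2 : nsq (A *m u) <= Kq (A^T *m A).
  rewrite /nsq dot_mulmx dotC mulmxA.
  apply: le_trans (ler_norm _) _; apply: (le_trans (quad_bound _ _)).
  have := Kq_ge0 (A^T *m A); have := nsq_ge0 u; nra.
have := vnorm_sq (A *m u); have := vnorm_ge0 (A *m u); have := Kq_ge0 (A^T *m A).
nra.
Qed.

Lemma opnorm_ge0 m k (A : 'M[R]_(m, k)) : 0 <= opnorm A.
Proof.
apply: le_trans (ub_le_sup (opnorm_ub A) _); last first.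
  exists 0; split; first by rewrite vnormE /nsq dot0r sqrtr0.
  by rewrite mulmx0.
by rewrite vnorm_ge0.
Qed.

Lemma opnormP m k (A : 'M[R]_(m, k)) u : vnorm (A *m u) <= opnorm A * vnorm u.
Proof.
have [->|un0] := eqVneq u 0.
  by rewrite mulmx0 !vnormE /nsq !dot0r sqrtr0 mulr0.
have vp : 0 < vnorm u.
  rewrite lt_neqAle vnorm_ge0 andbT eq_sym vnormE sqrtr_eq0 -ltNge lt_neqAle nsq_ge0 andbT.
  by apply: contra un0 => /eqP h; apply/eqP; exact: nsq_eq0 (esym h).
have h1 : vnorm ((vnorm u)^-1 *: u) <= 1.
  by rewrite vnormZ ger0_norm ?invr_ge0 ?vnorm_ge0 // mulVf ?gt_eqF.
have := ub_le_sup (opnorm_ub A) (ex_intro _ ((vnorm u)^-1 *: u) (conj h1 erefl)).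
rewrite -scalemxAr vnormZ ger0_norm ?invr_ge0 ?vnorm_ge0 //.
by rewrite mulrC -ler_pdivrMr // mulrC.
Qed.


Lemma nsq_gt0 m (u : 'cV[R]_m) : u != 0 -> 0 < nsq u.
Proof.
move=> un0; rewrite lt_neqAle nsq_ge0 andbT eq_sym.
by apply: contra un0 => /eqP h; apply/eqP; exact: nsq_eq0 h.
Qed.

Lemma eig_col m (A : 'M[R]_m) a : eigenvalue A a ->
  exists2 c : 'cV[R]_m, c != 0 & A^T *m c = a *: c.
Proof.
move/eigenvalueP => [w wA wn0]; exists w^T; first by rewrite trmx_eq0.
by rewrite -trmx_mul wA linearZ.
Qed.

Lemma eig_quad m (A : 'M[R]_m) a : eigenvalue A a ->
  exists2 c : 'cV[R]_m, c != 0 & a * nsq c = dot c (A *m c).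
Proof.
move/eig_col => [c cn0 hc]; exists c => //.
by rewrite /nsq -dotZr -hc dot_mulmx trmxK dotC.
Qed.

Lemma eig_lbound m (A : 'M[R]_m) : has_lbound [set a | eigenvalue A a].
Proof.
exists (- Kq A) => a /= /eig_quad [c cn0 h].
have cp := nsq_gt0 cn0.
have := quad_bound A c; rewrite -h => h2.
have := ler_norm (- (a * nsq c)); rewrite normrN => h3.
have : - (Kq A * nsq c) <= a * nsq c by lra.
nra.
Qed.


Lemma quadZ m (A : 'M[R]_m) (w : 'cV[R]_m) c :
  dot (c *: w) (A *m (c *: w)) = c ^+ 2 * dot w (A *m w).
Proof. by rewrite -scalemxAr dotZl dotZr mulrA expr2. Qed.

Lemma aux_contra (K e d mu : R) : 0 <= K -> e * (K + 1) = 1 -> d < mu + e ->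
  1 <= (d - mu) * (K * 1) -> 0 <= d - mu -> False.
Proof. move=> Kp e1 h1 h2 h3; rewrite mulr1 in h2; nra. Qed.

Lemma lmin_le m (A : 'M[R]_m) (u : 'cV[R]_m) : A^T = A -> u != 0 ->
  lambda_min A <= dot u (A *m u) / nsq u.
Proof.
move=> AT un0.
set S := [set q | exists w : 'cV[R]_m, nsq w = 1 /\ q = dot w (A *m w)].
have normal : forall w : 'cV[R]_m, w != 0 ->
    nsq ((vnorm w)^-1 *: w) = 1 /\
    dot ((vnorm w)^-1 *: w) (A *m ((vnorm w)^-1 *: w)) = dot w (A *m w) / nsq w.
  move=> w wn0; have wp := nsq_gt0 wn0.
  rewrite nsqZ quadZ exprVn vnorm_sq; split; first by rewrite mulVf ?gt_eqF.
  by rewrite mulrC.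
have Sne : S !=set0.
  have [h1 h2] := normal u un0; by exists (dot u (A *m u) / nsq u); exists ((vnorm u)^-1 *: u).
have Slb : has_lbound S.
  exists (- Kq A) => _ [w [hw ->]].
  have := quad_bound A w; rewrite hw mulr1 => h.
  have := ler_norm (- dot w (A *m w)); rewrite normrN; lra.
set mu := inf S.
have mule : mu <= dot u (A *m u) / nsq u.
  apply: ge_inf => //; have [h1 h2] := normal u un0; by exists ((vnorm u)^-1 *: u).
suff eigmu : eigenvalue A mu.
  apply: le_trans mule; exact: ge_inf (eig_lbound A) _ eigmu.
set B := A - mu%:M.
have BT : B^T = B by rewrite /B linearB /= AT tr_scalar_mx.
have Bq : forall w, dot w (B *m w) = dot w (A *m w) - mu * nsq w.
  by move=> w; rewrite /B mulmxBl dotBr mul_scalar_mx dotZr.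
have psd : forall w, 0 <= dot w (B *m w).
  move=> w; rewrite Bq; have [->|wn0] := eqVneq w 0.
    by rewrite /nsq mulmx0 !dot0r mulr0 subrr.
  have [h1 h2] := normal w wn0.
  have : mu <= dot w (A *m w) / nsq w.
    by apply: ge_inf => //; exists ((vnorm w)^-1 *: w).
  rewrite ler_pdivlMr ?nsq_gt0 //; lra.
have detB : \det B == 0.
  apply/negPn/negP => dn0.
  have Bu : B \in unitmx by rewrite unitmxE unitfE.
  set K := Kq (invmx B).
  have key : forall z, nsq z ^+ 2 <= dot z (B *m z) * (K * nsq z).
    move=> z; set y := invmx B *m z.
    have By : B *m y = z by rewrite /y mulmxA mulmxV // mul1mx.
    have e1 : nsq z = dot z (B *m y) by rewrite By.
    rewrite {1}e1; apply: (le_trans (psd_cs z y BT psd)).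
    apply: ler_wpM2l; first exact: psd.
    rewrite By dotC /y; apply: le_trans (ler_norm _) _; exact: quad_bound.
  have Kp : 0 <= K by apply: Kq_ge0.
  have ep : 0 < (K + 1)^-1 by rewrite invr_gt0; lra.
  have hl : inf S < mu + (K + 1)^-1 by rewrite ltrDl.
  have [_ [z [hz ->]] hlt] := inf_lt Sne hl.
  have := key z; rewrite hz Bq hz mulr1 expr1n => h.
  have := psd z; rewrite Bq hz mulr1 => h0.
  have e1 : (K + 1)^-1 * (K + 1) = 1 by rewrite mulVf // gt_eqF //; lra.
  exact: (aux_contra Kp e1 hlt h h0).
move/det0P: detB => [w wn0 wB].
apply/eigenvalueP; exists w => //.
move: wB; rewrite /B mulmxBr mul_mx_scalar => /eqP; rewrite subr_eq0 => /eqP //.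
Qed.


Section Decomp.
Variables (m r : nat) (lam : nat -> R) (v : nat -> 'cV[R]_m).
Hypothesis ortho : forall i j : nat, (i < r)%N -> (j < r)%N -> dot (v i) (v j) = (i == j)%:R.

Lemma delta_sum (F : 'I_r -> R) (i : 'I_r) :
  \sum_(j < r) F j * dot (v i) (v j) = F i.
Proof.
rewrite (bigD1 i) //= ortho // eqxx mulr1 big1 ?addr0 // => j ji.
rewrite ortho //; suff -> : (i == j :> nat) = false by rewrite mulr0.
by apply/negbTE; rewrite eq_sym.
Qed.

Lemma decomp_quad (y z : 'cV[R]_m) :
  dot y ((\sum_(i < r) lam i *: (v i *m (v i)^T)) *m z) =
  \sum_(i < r) lam i * (dot y (v i) * dot (v i) z).
Proof.
rewrite dot_sumrM; apply: eq_bigr => i _.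
by rewrite -scalemxAl dotZr dot_outer.
Qed.

Lemma bessel (c : 'cV[R]_m) : \sum_(i < r) dot (v i) c ^+ 2 <= nsq c.
Proof.
set w := \sum_(i < r) dot (v i) c *: v i.
have h1 : dot c w = \sum_(i < r) dot (v i) c ^+ 2.
  rewrite /w dot_sumr; apply: eq_bigr => i _; by rewrite dotZr dotC expr2.
have h2 : forall i : 'I_r, dot (v i) w = dot (v i) c.
  move=> i; rewrite /w dot_sumr -[RHS](delta_sum (fun j => dot (v j) c)).
  by apply: eq_bigr => j _; rewrite dotZr.
have h3 : dot w w = \sum_(i < r) dot (v i) c ^+ 2.
  rewrite {1}/w dotC dot_sumr; apply: eq_bigr => i _; by rewrite dotZr (dotC w) h2 expr2.
have := nsq_ge0 (c - w); rewrite /nsq dotBl !dotBr (dotC w c) h1 h3.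
lra.
Qed.


Variable Hm : 'M[R]_m.
Hypothesis Hdef : Hm = \sum_(i < r) lam i *: (v i *m (v i)^T).
Hypothesis lam_mono : forall i j : nat, (i <= j)%N -> (j < r)%N -> lam j <= lam i.

Lemma lmin_ge : (if r is r'.+1 then Num.min 0 (lam r') else 0) <= lambda_min Hm.
Proof.
set L := (if r is r'.+1 then Num.min 0 (lam r') else 0).
have L0 : L <= 0 by rewrite /L; case: (r) => [|r'] //; rewrite ge_min lexx.
have Llam : forall i : 'I_r, L <= lam i.
  rewrite /L; case: (r) lam_mono => [|r'] lm i; first by case: i.
  rewrite ge_min; apply/orP; right; apply: lm => //; rewrite -ltnS; exact: ltn_ord.
case: (pselect (exists a, eigenvalue Hm a)) => [[a0 ha0]|none].
  apply: lb_le_inf; first by exists a0.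
  move=> a /eig_quad [c cn0 h].
  have cp := nsq_gt0 cn0.
  have e : a * nsq c = \sum_(i < r) lam i * dot (v i) c ^+ 2.
    rewrite h Hdef decomp_quad; apply: eq_bigr => i _; by rewrite dotC expr2.
  have : L * nsq c <= a * nsq c.
    rewrite e; apply: le_trans (_ : L * \sum_(i < r) dot (v i) c ^+ 2 <= _).
      by rewrite ler_wnM2l // bessel.
    rewrite mulr_sumr; apply: ler_sum => i _; apply: ler_wpM2r; first exact: sqr_ge0.
    exact: Llam.
  by rewrite ler_pM2r.
rewrite /lambda_min.
have -> : [set a | eigenvalue Hm a] = set0.
  by apply/seteqP; split => a //= ha; apply: none; exists a.
by rewrite inf0.
Qed.

Lemma lam_le (i : nat) : (i < r)%N -> lam i <= opnorm Hm.
Proof.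
move=> ir.
have e : dot (v i) (Hm *m v i) = lam i.
  rewrite Hdef decomp_quad.
  have := delta_sum (fun j : 'I_r => lam j * dot (v j) (v i)) (Ordinal ir) => /=.
  rewrite ortho // eqxx mulr1 => <-.
  by apply: eq_bigr => j _; rewrite mulrA [lam j * _ * _]mulrAC -!mulrA (mulrC (dot _ _)).
have n1 : vnorm (v i) = 1 by rewrite vnormE /nsq ortho // eqxx sqrtr1.
rewrite -e; apply: le_trans (ler_norm _) _; apply: le_trans (cs_abs _ _) _.
by rewrite n1 mul1r -[X in _ <= X]mulr1 -[X in _ <= _ * X]n1 opnormP.
Qed.

End Decomp.

End Aux.

Unset Implicit Arguments.
Theorem lemma3p9 (R : realType) (n p : nat)
  (f : 'cV[R]_n -> R) (flow LH M : R)
  (* algorithm parameters *)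
  (Delta_max gamma_dec gamma_inc eta mu kef keg keh : R)
  (* iterates of the algorithm *)
  (x : nat -> 'cV[R]_n) (Delta : nat -> R) (P : nat -> 'M[R]_(n, p))
  (g : nat -> 'cV[R]_p) (H : nat -> 'M[R]_p) (s : nat -> 'cV[R]_p)
  (* well-alignment parameters, tolerance, iteration, spectral decomposition *)
  (alpha Pmax eps : R) (k : nat) (r : nat) (lam : nat -> R) (v : nat -> 'cV[R]_n) :
  (* algorithm setup *)
  (1 <= p <= n)%N ->
  0 < Delta 0 -> Delta 0 <= Delta_max ->
  0 < gamma_dec -> gamma_dec < 1 -> 1 < gamma_inc ->
  0 < eta -> eta < 1 -> 0 < mu ->
  0 < kef -> 0 < keg -> 0 < keh ->
  (forall j, (H j)^T = H j) ->
  (forall j, fully_quadratic f (x j) (P j) (Delta j) (g j) (H j) kef keg keh) ->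
  (forall j, vnorm (s j) <= Delta j) ->
  (forall j, successful eta mu f (x j) (P j) (Delta j) (g j) (H j) (s j) ->
     x j.+1 = x j + P j *m s j /\ Delta j.+1 = Num.min (gamma_inc * Delta j) Delta_max) ->
  (forall j, ~ successful eta mu f (x j) (P j) (Delta j) (g j) (H j) (s j) ->
     x j.+1 = x j /\ Delta j.+1 = gamma_dec * Delta j) ->
  (* assumptions on f *)
  (forall y, flow <= f y) ->
  C2 f ->
  (forall y z, opnorm (hess f y - hess f z) <= LH * vnorm (y - z)) ->
  0 < M -> (forall j, opnorm (hess f (x j)) <= M) ->
  (* the fixed iteration k *)
  0 < alpha -> alpha < 1 -> 0 < Pmax ->
  0 < eps ->
  eig_decomp (hess f (x k)) r lam v ->
  0 < (1 - alpha) ^+ 2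
        - 4 * M * (r%:R - 1) * alpha ^+ 2 / (eps * (1 - alpha) ^+ 2) ->
  well_aligned alpha Pmax (P k) (grad f (x k)) r v ->
  eps <= sigma_of (grad f (x k)) (hess f (x k)) ->
  successful eta mu f (x k) (P k) (Delta k) (g k) (H k) (s k) ->
  let theta := (1 - alpha) ^+ 2
        - 4 * M * (r%:R - 1) * alpha ^+ 2 / (eps * (1 - alpha) ^+ 2) in
  let kappa_sigma := Num.max (keg * Delta_max) keh in
  let c1 := Num.min (1 - alpha) (Num.min ((1 - alpha) ^+ 2) theta)
              / (1 + kappa_sigma / mu) in
  c1 * eps <= sigma_of (g k) (H k).
Proof.
move=> hp D0 D0m gd0 gd1 gi1 et0 et1 mu0 kef0 keg0 keh0 Hsym FQ sle succ_up fail_up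
  flowb C2f Lip M0 HM a0 a1 Pm0 e0 ED thpos WA sig succ.
cbv zeta.
set theta := ((1 - alpha) ^+ 2 - 4 * M * (r%:R - 1) * alpha ^+ 2 / (eps * (1 - alpha) ^+ 2)).
set kappa := Num.max (keg * Delta_max) keh.
have Dbd : forall j, 0 < Delta j /\ Delta j <= Delta_max.
  elim=> [|j [Dp Dm]]; first by split.
  case: (pselect (successful eta mu f (x j) (P j) (Delta j) (g j) (H j) (s j))) => hs.
    have [_ ->] := succ_up j hs; split; last by rewrite ge_min lexx orbT.
    by rewrite lt_min (lt_le_trans Dp Dm) andbT mulr_gt0 // (lt_trans ltr01).
  have [_ ->] := fail_up j hs; split; first by rewrite mulr_gt0.
  nra.
have [Dp Dm] := Dbd k.
set G := grad f (x k); set Hs := hess f (x k); set Pk := P k.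
set gh := g k; set Hh := H k; set Dk := Delta k.
have h00 : vnorm (0 : 'cV[R]_p) <= Dk by rewrite vnormE /nsq dot0r sqrtr0 ltW.
have [_ hg hH] := FQ k 0 h00.
rewrite mulmx0 addr0 /model_grad mulmx0 addr0 -/G -/gh -/Pk in hg.
rewrite mulmx0 addr0 -/Hs -/Hh -/Pk in hH.
have [_ hmu] := succ.
set sm := sigma_of gh Hh.
have k1 : keg * Delta_max <= kappa by rewrite le_max lexx.
have k2 : keh <= kappa by rewrite le_max lexx orbT.
have kap0 : 0 <= kappa by apply: le_trans k2; exact: ltW.
have hg' : keg * Dk ^+ 2 <= kappa * Dk.
  have h1 : keg * Dk <= kappa.
    by apply: le_trans k1; rewrite ler_pM2l.
  by rewrite expr2 mulrA ler_pM2r.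
have hH' : keh * Dk <= kappa * Dk by rewrite ler_pM2r.
set m0 := Num.min (1 - alpha) (Num.min ((1 - alpha) ^+ 2) theta).
suff main : m0 * eps <= sm + kappa * Dk.
  have den : 0 < 1 + kappa / mu.
    have : 0 <= kappa / mu by rewrite divr_ge0 // ltW.
    lra.
  rewrite mulrAC ler_pdivrMr //.
  have Dsm : Dk <= sm / mu by rewrite ler_pdivlMr // mulrC.
  have -> : sm * (1 + kappa / mu) = sm + kappa * (sm / mu) by ring.
  apply: le_trans main _; rewrite lerD2l; exact: ler_wpM2l.
have m0a : m0 <= 1 - alpha by rewrite /m0 ge_min lexx.
have m0t : m0 <= theta by rewrite /m0 !ge_min lexx !orbT.
have smg : vnorm gh <= sm by rewrite /sm /sigma_of le_max lexx.
have smt : - lambda_min Hh <= sm by rewrite /sm /sigma_of /tau_of !le_max lexx !orbT.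
have [_ hgrad hvr hal] := WA.
rewrite -/G -/Pk in hgrad hvr hal.
rewrite -/Dk in hg hH hmu.
move: sig; rewrite -/G -/Hs /sigma_of le_max => /orP [sigA|sigB].
  have tri := vnorm_triangle gh (Pk^T *m G - gh).
  rewrite addrC subrK in tri.
  have h1 : (1 - alpha) * eps <= (1 - alpha) * vnorm G by rewrite ler_pM2l // subr_gt0.
  have h2 : m0 * eps <= (1 - alpha) * eps by rewrite ler_pM2r.
  lra.
have eL : eps <= - lambda_min Hs.
  move: sigB; rewrite /tau_of le_max => /orP [//|h]; lra.
have [rk lmono ortho Hdef] := ED.
rewrite -/Hs in Hdef.
have Lle := lmin_ge ortho Hdef lmono.
have rpos : (0 < r)%N.
  move: Lle; case: (r) => [|r'] //= h; lra.
set r' := r.-1 in hvr hal.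
have rE : r = r'.+1 by rewrite /r' prednK.
have lr : lam r' <= - eps.
  move: Lle; rewrite rE /= => h.
  have : Num.min 0 (lam r') <= - eps by apply: le_trans h _; lra.
  by rewrite ge_min => /orP [h1|//]; lra.
set wh := Pk^T *m v r'.
have hw : 1 - alpha <= vnorm wh := hvr rpos.
set N := nsq wh.
have hN : (1 - alpha) ^+ 2 <= N.
  have := vnorm_sq wh; rewrite -/N => <-; have h : 0 <= 1 - alpha by lra.
  move: hw h; set a := 1 - alpha; set b := vnorm wh => hw h; nra.
have a2p : 0 < (1 - alpha) ^+ 2 by rewrite exprn_gt0 // subr_gt0.
have Np : 0 < N by apply: lt_le_trans hN.
have whn0 : wh != 0.
  by apply/eqP => h; move: Np; rewrite /N h /nsq dot0r ltxx.
have hl := lmin_le (Hsym k) whn0; rewrite -/Hh -/N in hl.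
set Ht := Pk^T *m Hs *m Pk.
have e1 : dot wh (Hh *m wh) = dot wh (Ht *m wh) - dot wh ((Ht - Hh) *m wh).
  rewrite mulmxBl dotBr; ring.
have b1 : `|dot wh ((Ht - Hh) *m wh)| <= keh * Dk * N.
  apply: le_trans (cs_abs _ _) _.
  apply: le_trans (_ : vnorm wh * (opnorm (Ht - Hh) * vnorm wh) <= _).
    by apply: ler_wpM2l; [exact: vnorm_ge0 | exact: opnormP].
  rewrite mulrCA -expr2 vnorm_sq -/N; apply: ler_wpM2r; [exact: ltW | exact: hH].
set d := fun i => dot (Pk^T *m v i) wh.
have e2 : dot wh (Ht *m wh) = \sum_(i < r) lam i * d i ^+ 2.
  rewrite /Ht -!mulmxA dot_mulmx trmxK Hdef decomp_quad.
  by apply: eq_bigr => i _; rewrite (dotC (Pk *m wh)) dot_mulmx expr2.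
have lamM : forall i, (i < r)%N -> lam i <= M.
  move=> i ir; apply: le_trans (lam_le ortho Hdef ir) _; exact: HM.
have s1 : \sum_(i < r) lam i * d i ^+ 2 <= r'%:R * (4 * M * alpha ^+ 2) + lam r' * N ^+ 2.
  rewrite rE big_ord_recr /=; apply: lerD; last by rewrite /d -/wh.
  apply: le_trans (_ : \sum_(i < r') (4 * M * alpha ^+ 2) <= _); last first.
    by rewrite sumr_const card_ord [r'%:R * _]mulrC mulr_natr.
  apply: (@ler_sum _ _ _ _ _ _) => i _.
  have hd := hal i (ltn_ord i); rewrite -/wh in hd.
  have hlm : lam i <= M by apply: lamM; rewrite rE ltnS ltnW.
  have hd0 : 0 <= d i ^+ 2 by apply: sqr_ge0.
  rewrite /d in hd0 *; nra.
have hl' : lambda_min Hh * N <= dot wh (Hh *m wh) by rewrite -ler_pdivlMr.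
have := ler_norm (- dot wh ((Ht - Hh) *m wh)); rewrite normrN => b2.
set A := r'%:R * (4 * M * alpha ^+ 2).
have A0 : 0 <= A by rewrite /A mulr_ge0 // ?ler0n // mulr_ge0 ?sqr_ge0 // mulr_ge0 // ltW.
set q := A / (1 - alpha) ^+ 2.
have q0 : 0 <= q by rewrite /q divr_ge0 // ltW.
have qe : q * (1 - alpha) ^+ 2 = A by rewrite /q mulfVK // gt_eqF.
have qN : A <= q * N by rewrite -qe ler_wpM2l.
have rr : r%:R - 1 = r'%:R :> R by rewrite rE -addn1 natrD addrK.
have th : eps * theta = eps * (1 - alpha) ^+ 2 - q.
  rewrite /theta rr /q /A; field.
  by rewrite !gt_eqF // subr_gt0.
have E : (q + lam r' * N + keh * Dk) * N = q * N + lam r' * N ^+ 2 + keh * Dk * N by ring.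
have h3 : lambda_min Hh * N <= (q + lam r' * N + keh * Dk) * N.
  rewrite E; move: hl' e1 e2 s1 b1 b2 qN; set X := dot wh (Hh *m wh).
  set Y := dot wh (Ht *m wh); set Z := dot wh ((Ht - Hh) *m wh).
  set S := \sum_(i < r) lam i * d i ^+ 2; rewrite /A; lra.
rewrite ler_pM2r // in h3.
have h4 : lam r' * N <= - eps * N by rewrite ler_pM2r.
have h5 : - eps * N <= - eps * (1 - alpha) ^+ 2 by rewrite !mulNr lerN2 ler_pM2l.
have h6 : m0 * eps <= theta * eps by rewrite ler_pM2r.
have h7 : keh * Dk <= kappa * Dk := hH'.
rewrite mulrC in th; lra.
Qed.
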